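(* Let $X\sim N(\mu,\sigma^2)$ and $Y\sim N(\theta,\sigma^2)$ be independent, $\sigma>0$, and $\tau\ge1$. Set $\eta=E_{(0,0)}\big[(X^2-\sigma^2)(Y^2-\sigma^2)\mathbb 1(X^2\vee Y^2>\sigma^2\tau)\big]$, the expectation taken under $\mu=\theta=0$. Then $\eta=-4\sigma^4\tau\,\phi^2(\tau^{1/2})$, and $$\Big|E\big[(X^2-\sigma^2)(Y^2-\sigma^2)\mathbb 1(X^2\vee Y^2>\sigma^2\tau)\big]-\eta-\mu^2\theta^2\Big|\le\min\{\mu^2,3\sigma^2\tau\}\min\{\theta^2,3\sigma^2\tau\}+2\sigma^2\tau^{1/2}\phi(\tau^{1/2})\min\{\mu^2,3\sigma^2\tau\}+2\sigma^2\tau^{1/2}\phi(\tau^{1/2})\min\{\theta^2,3\sigma^2\tau\}.$$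
   Context: $\phi$ denotes the standard normal density; $X^2\vee Y^2=\max\{X^2,Y^2\}$. *)

(* Defs.v *)
From Stdlib Require Import Reals Lra.
Open Scope R_scope.

Definition phi (x : R) : R := exp (- (x ^ 2) / 2) / sqrt (2 * PI).

Definition npdf (m s x : R) : R := phi ((x - m) / s) / s.

Definition is_RInt (f : R -> R) (a b v : R) : Prop :=
  exists pr : Riemann_integrable f a b, RiemannInt pr = v.

Definition improper_int (f : R -> R) (l : R) : Prop :=
  forall eps, 0 < eps -> exists M, forall a b, a <= - M -> M <= b ->
    exists v, is_RInt f a b v /\ Rabs (v - l) < eps.

(* E[g(X,Y)] = l for X ~ N(mu, s^2), Y ~ N(th, s^2) independent,
   computed as the iterated integral  int ( int g(x,y) p_mu(x) dx ) p_th(y) dy *)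
Definition expect2 (g : R -> R -> R) (mu th s l : R) : Prop :=
  exists h : R -> R,
    (forall y, improper_int (fun x => g x y * npdf mu s x) (h y)) /\
    improper_int (fun y => h y * npdf th s y) l.

Definition ind_max (c x y : R) : R :=
  if Rlt_dec c (Rmax (x ^ 2) (y ^ 2)) then 1 else 0.

Definition gfun (s tau x y : R) : R :=
  (x ^ 2 - s ^ 2) * (y ^ 2 - s ^ 2) * ind_max (s ^ 2 * tau) x y.

(* Main.v *)
Require Import Defs.
From Stdlib Require Import Reals Lra Psatz FunctionalExtensionality.
From Coquelicot Require Import Coquelicot.
Open Scope R_scope.

Ltac Req := match goal with |- @eq _ ?a ?b => change (@eq R a b) end.

Definition gau (t : R) : R := exp (- (t ^ 2)).
Definition Ig (x : R) : R := RInt gau 0 x.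
Definition gf (u t : R) : R := exp (- (u ^ 2 * (1 + t ^ 2))) / (1 + t ^ 2).
Definition Gg (x : R) : R := RInt (fun t => gf x t) 0 1.

Lemma RInt_scal_R (f : R -> R) a b c : ex_RInt f a b -> RInt (fun x => c * f x) a b = c * RInt f a b.
Proof. intros H. exact (@RInt_scal R_CompleteNormedModule f a b c H). Qed.
Lemma RInt_lin_R (f : R -> R) u a b : ex_RInt f (u*a) (u*b) -> RInt (fun y => u * f (u*y)) a b = RInt f (u*a) (u*b).
Proof. intros H. 
 assert (H2 := @RInt_comp_lin R_CompleteNormedModule f u 0 a b).
 rewrite !Rplus_0_r in H2. rewrite <- H2 by exact H. apply RInt_ext. intros. rewrite Rplus_0_r. reflexivity. Qed.

Lemma gau_cont : forall x, continuous gau x.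
Proof. intros x. apply (@ex_derive_continuous R_AbsRing R_NormedModule). unfold gau. auto_derive. auto. Qed.

Lemma Ig_ex : forall a b, ex_RInt gau a b.
Proof. intros. apply (@ex_RInt_continuous R_CompleteNormedModule). intros; apply gau_cont. Qed.

Lemma Ig_deriv : forall x : R, is_derive Ig x (gau x).
Proof.
  intros x. apply is_derive_RInt with 0.
  - apply filter_forall. intros b. apply (@RInt_correct R_CompleteNormedModule). apply Ig_ex.
  - apply gau_cont.
Qed.

Lemma gf_derive : forall u t : R, is_derive (fun z => gf z t) u (-2 * u * exp (- (u ^ 2 * (1 + t ^ 2)))).
Proof.
  intros u t. unfold gf. auto_derive. auto. simpl. field. nra.
Qed.

Lemma Gg_deriv : forall x : R, is_derive Gg x (- 2 * gau x * Ig x).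
Proof.
  intros x.
  assert (H := is_derive_RInt_param gf 0 1 x).
  assert (E : RInt (fun t => Derive (fun u => gf u t) x) 0 1 = - 2 * gau x * Ig x).
  { rewrite (RInt_ext _ (fun t => (-2 * gau x) * (x * gau (x * t)))).
    - rewrite RInt_scal_R.
      + rewrite RInt_lin_R.
        * unfold Ig. replace (x * 0) with 0 by ring. replace (x * 1) with x by ring.
          reflexivity.
        * apply Ig_ex.
      + apply (@ex_RInt_continuous R_CompleteNormedModule). intros z _.
        apply (@ex_derive_continuous R_AbsRing R_NormedModule). unfold gau. auto_derive. auto.
    - intros t _. rewrite (is_derive_unique (fun u : R => gf u t) x _ (gf_derive x t)).
      unfold gau.
      replace (- (x ^ 2 * (1 + t ^ 2))) with (- (x ^ 2) + - ((x * t) ^ 2)) by ring.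
      rewrite exp_plus. change (@eq R (-2 * x * (exp (- x ^ 2) * exp (- (x * t) ^ 2))) (-2 * exp (- x ^ 2) * (x * exp (- (x * t) ^ 2)))). ring. }
  rewrite <- E. unfold Gg. apply H.
  - apply filter_forall. intros y t _. eexists. apply gf_derive.
  - intros t _. apply continuity_2d_pt_ext with (fun u v => -2 * u * exp (- (u ^ 2 * (1 + v ^ 2)))).
    + intros u v. symmetry. apply is_derive_unique. apply gf_derive.
    + apply continuity_2d_pt_mult.
      * apply continuity_2d_pt_mult. apply continuity_2d_pt_const. apply continuity_2d_pt_id1.
      * apply continuity_1d_2d_pt_comp.
        -- apply derivable_continuous_pt. apply derivable_pt_exp.
        -- apply continuity_2d_pt_opp. apply continuity_2d_pt_mult.
           ++ simpl. apply continuity_2d_pt_mult. apply continuity_2d_pt_id1.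
              apply continuity_2d_pt_mult. apply continuity_2d_pt_id1. apply continuity_2d_pt_const.
           ++ apply continuity_2d_pt_plus. apply continuity_2d_pt_const.
              simpl. apply continuity_2d_pt_mult. apply continuity_2d_pt_id2.
              apply continuity_2d_pt_mult. apply continuity_2d_pt_id2. apply continuity_2d_pt_const.
  - apply filter_forall. intros y. apply (@ex_RInt_continuous R_CompleteNormedModule). intros z _.
    apply (@ex_derive_continuous R_AbsRing R_NormedModule). unfold gf. auto_derive. nra.
Qed.

Definition Hg (x : R) : R := Ig x * Ig x + Gg x.

Lemma Hg_deriv : forall x : R, is_derive Hg x 0.
Proof.
  intros x. unfold Hg.
  replace 0 with ((gau x * Ig x + Ig x * gau x) + (- 2 * gau x * Ig x)) by ring.
  apply (@is_derive_plus R_AbsRing R_NormedModule).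
  - apply (@is_derive_mult R_AbsRing); try apply Ig_deriv. intros; apply Rmult_comm.
  - apply Gg_deriv.
Qed.

Lemma atan_int : is_RInt (fun t => / (1 + t ^ 2)) 0 1 (PI / 4).
Proof.
  replace (PI / 4) with (atan 1 - atan 0) by (rewrite atan_1, atan_0; ring).
  apply (@is_RInt_derive R_CompleteNormedModule atan (fun t => / (1 + t ^ 2)) 0 1).
  - intros x _. apply is_derive_Reals. apply derivable_pt_lim_atan.
  - intros x _. apply (@ex_derive_continuous R_AbsRing R_NormedModule). auto_derive. nra.
Qed.

Lemma Hg0 : Hg 0 = PI / 4.
Proof.
  unfold Hg, Ig, Gg. rewrite RInt_point.
  rewrite (RInt_ext _ (fun t => / (1 + t ^ 2))).
  - rewrite (is_RInt_unique _ _ _ _ atan_int). unfold zero; simpl. Req. rewrite Rmult_0_l, Rplus_0_l. reflexivity.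
  - intros t _. unfold gf. replace (- (0 ^ 2 * (1 + t ^ 2))) with 0 by ring.
    rewrite exp_0. unfold Rdiv. Req. ring.
Qed.

Lemma Hg_const : forall x, Hg x = PI / 4.
Proof.
  intros x. rewrite <- Hg0. destruct (Rtotal_order 0 x) as [H|[H|H]].
  - symmetry. apply (@eq_is_derive R_NormedModule Hg 0 x).
    + intros t _. apply Hg_deriv.
    + exact H.
  - subst; reflexivity.
  - apply (@eq_is_derive R_NormedModule Hg x 0).
    + intros t _. apply Hg_deriv.
    + exact H.
Qed.

Lemma gau_pos : forall x, 0 < gau x.
Proof. intros; unfold gau; apply exp_pos. Qed.

Lemma gf_ex : forall x a b, ex_RInt (fun t => gf x t) a b.
Proof.
  intros. apply (@ex_RInt_continuous R_CompleteNormedModule). intros z _.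
  apply (@ex_derive_continuous R_AbsRing R_NormedModule). unfold gf. auto_derive. nra.
Qed.

Lemma Gg_bounds : forall x, 0 <= Gg x <= gau x.
Proof.
  intros x. unfold Gg. split.
  - apply RInt_ge_0; try lra. apply gf_ex.
    intros t _. unfold gf. apply Rlt_le. apply Rdiv_lt_0_compat. apply exp_pos. nra.
  - replace (gau x) with (RInt (fun _ => gau x) 0 1).
    + apply RInt_le; try lra. apply gf_ex. apply ex_RInt_const.
      intros t _. unfold gf, gau.
      assert (E1 : exp (- (x ^ 2 * (1 + t ^ 2))) <= exp (- x ^ 2)).
      { destruct (Req_dec (x ^ 2 * (1 + t ^ 2)) (x ^ 2)) as [E|E].
        - rewrite E. lra.
        - apply Rlt_le. apply exp_increasing. nra. }
      assert (0 < exp (- (x ^ 2 * (1 + t ^ 2)))) by apply exp_pos.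
      unfold Rdiv. apply Rle_trans with (exp (- (x ^ 2 * (1 + t ^ 2))) * 1); [|lra].
      apply Rmult_le_compat_l; [lra|]. rewrite <- Rinv_1. apply Rinv_le_contravar; nra.
    + rewrite RInt_const. unfold scal; simpl; unfold mult; simpl. Req. ring.
Qed.

Lemma Ig_nonneg : forall x, 0 <= x -> 0 <= Ig x.
Proof.
  intros x Hx. unfold Ig. apply RInt_ge_0; auto. apply Ig_ex.
  intros; apply Rlt_le, gau_pos.
Qed.

Lemma sqrtPI_pos : 0 < sqrt PI.
Proof. apply sqrt_lt_R0. apply PI_RGT_0. Qed.

Lemma Ig_tail : forall x, 0 <= x ->
  0 <= sqrt PI / 2 - Ig x <= 2 / sqrt PI * gau x.
Proof.
  intros x Hx. assert (HI := Ig_nonneg x Hx). assert (HG := Gg_bounds x).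
  assert (HH := Hg_const x). unfold Hg in HH.
  assert (Hq := sqrtPI_pos). assert (Hs : sqrt PI * sqrt PI = PI) by (apply sqrt_sqrt; left; apply PI_RGT_0).
  set (q := sqrt PI) in *. set (I := Ig x) in *.
  assert (E : (q / 2 - I) * (q / 2 + I) = Gg x) by nra.
  assert (I <= q / 2) by nra.
  split; [lra|].
  apply Rmult_le_reg_r with (q / 2 + I); [lra|]. rewrite E.
  apply Rle_trans with (2 / q * gau x * (q / 2)).
  - replace (2 / q * gau x * (q / 2)) with (gau x) by (field; lra). lra.
  - apply Rmult_le_compat_l; [|lra]. apply Rmult_le_pos. apply Rlt_le, Rdiv_lt_0_compat; lra.
    apply Rlt_le, gau_pos.
Qed.

Lemma Ig_odd : forall x, Ig (- x) = - Ig x.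
Proof.
  intros x. unfold Ig.
  replace (- x) with (-1 * x) by ring.
  rewrite <- (Rmult_0_r (-1)) at 1.
  rewrite <- RInt_lin_R by apply Ig_ex.
  rewrite (RInt_ext _ (fun y => -1 * gau y)).
  - rewrite RInt_scal_R by apply Ig_ex. ring.
  - intros; unfold gau. replace ((-1 * x0) ^ 2) with (x0 ^ 2) by ring. reflexivity.
Qed.

Definition Phi (z : R) : R := RInt phi 0 z.

Lemma sqrt2_pos : 0 < sqrt 2.
Proof. apply sqrt_lt_R0; lra. Qed.
Lemma sqrt2_sq : sqrt 2 * sqrt 2 = 2.
Proof. apply sqrt_sqrt; lra. Qed.
Lemma sqrtPI_sq : sqrt PI * sqrt PI = PI.
Proof. apply sqrt_sqrt; left; apply PI_RGT_0. Qed.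
Lemma sqrt2PI : sqrt (2 * PI) = sqrt 2 * sqrt PI.
Proof. apply sqrt_mult; [lra| left; apply PI_RGT_0]. Qed.

Lemma phi_pos : forall x, 0 < phi x.
Proof.
  intros; unfold phi. apply Rdiv_lt_0_compat. apply exp_pos.
  apply sqrt_lt_R0. assert (H := PI_RGT_0). lra.
Qed.

Lemma phi_even : forall x, phi (- x) = phi x.
Proof. intros; unfold phi. replace ((- x) ^ 2) with (x ^ 2) by ring. reflexivity. Qed.

Lemma phi_deriv : forall x : R, is_derive phi x (- x * phi x).
Proof.
  intros x. unfold phi. auto_derive.
  - auto.
  - simpl. unfold Rdiv. Req. field. rewrite sqrt2PI. assert (H1 := sqrt2_pos). assert (H2 := sqrtPI_pos). nra.
Qed.

Lemma phi_cont : forall x, continuous phi x.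
Proof. intros x. apply (@ex_derive_continuous R_AbsRing R_NormedModule). eexists; apply phi_deriv. Qed.

Lemma phi_ex : forall a b, ex_RInt phi a b.
Proof. intros. apply (@ex_RInt_continuous R_CompleteNormedModule). intros; apply phi_cont. Qed.

Lemma Phi_deriv : forall x : R, is_derive Phi x (phi x).
Proof.
  intros x. apply is_derive_RInt with 0.
  - apply filter_forall. intros b. apply (@RInt_correct R_CompleteNormedModule). apply phi_ex.
  - apply phi_cont.
Qed.

Lemma RInt_phi : forall a b, RInt phi a b = Phi b - Phi a.
Proof.
  intros a b. unfold Phi.
  assert (H := @RInt_Chasles R_CompleteNormedModule phi 0 a b (phi_ex _ _) (phi_ex _ _)).
  simpl in H. unfold plus in H; simpl in H. lra.
Qed.

Lemma Phi_eq : forall z, Phi z = Ig (/ sqrt 2 * z) / sqrt PI.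
Proof.
  intros z. unfold Phi, Ig.
  assert (H1 := sqrt2_pos). assert (H2 := sqrtPI_pos). assert (H3 := sqrt2_sq).
  rewrite (RInt_ext _ (fun y => / sqrt PI * (/ sqrt 2 * gau (/ sqrt 2 * y)))).
  - rewrite RInt_scal_R.
    + rewrite RInt_lin_R. rewrite Rmult_0_r. unfold Rdiv. ring.
      apply Ig_ex.
    + apply (@ex_RInt_continuous R_CompleteNormedModule). intros.
      apply (@ex_derive_continuous R_AbsRing R_NormedModule). unfold gau. auto_derive. auto.
  - intros x _. unfold phi, gau. rewrite sqrt2PI.
    replace (- (/ sqrt 2 * x) ^ 2) with (- x ^ 2 / 2).
    + Req. field. lra.
    + replace ((/ sqrt 2 * x) ^ 2) with (x ^ 2 / (sqrt 2 * sqrt 2)) by (field; lra).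
      rewrite H3. field.
Qed.

Lemma Phi_odd : forall z, Phi (- z) = - Phi z.
Proof.
  intros z. rewrite !Phi_eq. replace (/ sqrt 2 * - z) with (- (/ sqrt 2 * z)) by ring.
  rewrite Ig_odd. unfold Rdiv. ring.
Qed.

Lemma Phi_mono : forall a b, a <= b -> Phi a <= Phi b.
Proof.
  intros a b Hab. assert (H : 0 <= RInt phi a b).
  { apply RInt_ge_0; auto. apply phi_ex. intros; apply Rlt_le, phi_pos. }
  rewrite RInt_phi in H. lra.
Qed.

Lemma Phi0 : Phi 0 = 0.
Proof. unfold Phi. exact (@RInt_point R_CompleteNormedModule 0 phi). Qed.

Lemma Phi_tail : forall z, 0 <= z -> 0 <= 1 / 2 - Phi z <= 2 / PI * exp (- z ^ 2 / 2).
Proof.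
  intros z Hz. rewrite Phi_eq.
  assert (H1 := sqrt2_pos). assert (H2 := sqrtPI_pos). assert (H3 := sqrt2_sq). assert (H4 := sqrtPI_sq).
  assert (Hw : 0 <= / sqrt 2 * z) by (apply Rmult_le_pos; [apply Rlt_le, Rinv_0_lt_compat; lra | lra]).
  destruct (Ig_tail _ Hw) as [T1 T2].
  assert (E : gau (/ sqrt 2 * z) = exp (- z ^ 2 / 2)).
  { unfold gau. f_equal. replace ((/ sqrt 2 * z) ^ 2) with (z ^ 2 / (sqrt 2 * sqrt 2)) by (field; lra).
    rewrite H3. field. }
  rewrite E in T2.
  replace (1 / 2 - Ig (/ sqrt 2 * z) / sqrt PI) with ((sqrt PI / 2 - Ig (/ sqrt 2 * z)) / sqrt PI) by (field; lra).
  split.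
  - apply Rmult_le_pos; [lra|]. apply Rlt_le, Rinv_0_lt_compat; lra.
  - apply Rmult_le_reg_r with (sqrt PI); [lra|].
    replace ((sqrt PI / 2 - Ig (/ sqrt 2 * z)) / sqrt PI * sqrt PI) with (sqrt PI / 2 - Ig (/ sqrt 2 * z)) by (field; lra).
    replace (2 / PI * exp (- z ^ 2 / 2) * sqrt PI) with (2 / sqrt PI * exp (- z ^ 2 / 2)).
    + exact T2.
    + replace (2 / PI) with (2 / (sqrt PI * sqrt PI)) by (rewrite H4; reflexivity). field. lra.
Qed.

Lemma Phi_bound : forall z, - (1 / 2) <= Phi z <= 1 / 2.
Proof.
  intros z. destruct (Rle_dec 0 z) as [H|H].
  - destruct (Phi_tail z H). assert (0 <= Phi z) by (rewrite <- Phi0; apply Phi_mono; auto). lra.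
  - assert (H' : 0 <= - z) by lra. destruct (Phi_tail _ H'). rewrite Phi_odd in *.
    assert (Phi z <= 0) by (rewrite <- Phi0; apply Phi_mono; lra). lra.
Qed.

Lemma exp_half_bound : forall z, 0 < z -> exp (- z ^ 2 / 2) <= 2 / z ^ 2.
Proof.
  intros z Hz. assert (H := exp_ineq1_le (z ^ 2 / 2)).
  replace (- z ^ 2 / 2) with (- (z ^ 2 / 2)) by field. rewrite exp_Ropp.
  assert (0 < exp (z ^ 2 / 2)) by apply exp_pos.
  assert (0 < z ^ 2) by nra.
  apply Rmult_le_reg_r with (exp (z ^ 2 / 2) * z ^ 2). nra.
  replace (/ exp (z ^ 2 / 2) * (exp (z ^ 2 / 2) * z ^ 2)) with (z ^ 2) by (field; lra).
  replace (2 / z ^ 2 * (exp (z ^ 2 / 2) * z ^ 2)) with (2 * exp (z ^ 2 / 2)) by (field; lra).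
  lra.
Qed.

Lemma phi_le_exp : forall z, phi z <= exp (- z ^ 2 / 2).
Proof.
  intros z. unfold phi. assert (H0 := exp_pos (- z ^ 2 / 2)).
  assert (Hs : 1 <= sqrt (2 * PI)).
  { rewrite <- sqrt_1. apply sqrt_le_1_alt. assert (H3 := PI2_3_2). lra. }
  unfold Rdiv. rewrite <- (Rmult_1_r (exp _)) at 2. apply Rmult_le_compat_l; [lra|].
  rewrite <- Rinv_1. apply Rinv_le_contravar; lra.
Qed.

Lemma zphi_tail : forall z, 1 <= z -> 0 <= z * phi z <= 2 / z.
Proof.
  intros z Hz. assert (H := phi_pos z). assert (H2 := phi_le_exp z).
  assert (H3 := exp_half_bound z ltac:(lra)). split. nra.
  apply Rle_trans with (z * (2 / z ^ 2)). apply Rmult_le_compat_l; lra.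
  right. field. lra.
Qed.

Lemma phi_tail : forall z, 1 <= z -> 0 <= phi z <= 2 / z.
Proof.
  intros z Hz. destruct (zphi_tail z Hz) as [Z1 Z2]. assert (H := phi_pos z). split; nra.
Qed.

Lemma Phi_tail2 : forall z, 1 <= z -> 0 <= 1 / 2 - Phi z <= 2 / z.
Proof.
  intros z Hz. destruct (Phi_tail z ltac:(lra)) as [T1 T2]. split; auto.
  assert (H3 := exp_half_bound z ltac:(lra)). assert (HP := PI2_3_2).
  assert (H0 := exp_pos (- z ^ 2 / 2)).
  apply Rle_trans with (2 / PI * (2 / z ^ 2)); auto.
  - apply Rle_trans with (2 / PI * exp (- z ^ 2 / 2)); auto. apply Rmult_le_compat_l; auto.
    apply Rlt_le, Rdiv_lt_0_compat; lra.
  - apply Rle_trans with (1 * (2 / z ^ 2)).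
    + apply Rmult_le_compat_r. apply Rlt_le, Rdiv_lt_0_compat; nra.
      apply Rmult_le_reg_r with PI; [lra|]. replace (2 / PI * PI) with 2 by (field; lra). lra.
    + replace (1 * (2 / z ^ 2)) with ((2 / z) * (1 / z)) by (field; lra).
      rewrite <- (Rmult_1_r (2 / z)) at 2. apply Rmult_le_compat_l.
      apply Rlt_le, Rdiv_lt_0_compat; lra.
      apply Rmult_le_reg_r with z; [lra|]. replace (1 / z * z) with 1 by (field; lra). lra.
Qed.

Definition Q (s m x : R) : R := - s * (x + m) * phi ((x - m) / s) + m ^ 2 * Phi ((x - m) / s).

Lemma Phi_comp_deriv : forall s m x : R, 0 < s ->
  is_derive (fun x => Phi ((x - m) / s)) x (phi ((x - m) / s) / s).
Proof.
  intros s m x Hs.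
  replace (phi ((x - m) / s) / s) with (scal (/ s) (phi ((x - m) / s))).
  - apply (is_derive_comp (K:=R_AbsRing) (V:=R_NormedModule) Phi (fun x => (x - m) / s) x).
    + apply Phi_deriv.
    + auto_derive; auto. simpl. Req. field. lra.
  - unfold scal; simpl; unfold mult; simpl. Req. field. lra.
Qed.

Lemma Q_deriv : forall s m x : R, 0 < s -> is_derive (Q s m) x ((x ^ 2 - s ^ 2) * npdf m s x).
Proof.
  intros s m x Hs.
  assert (D2 : is_derive (fun x => m ^ 2 * Phi ((x - m) / s)) x (m ^ 2 * (phi ((x - m) / s) / s))).
  { apply is_derive_scal. apply Phi_comp_deriv; auto. }
  assert (D1 : is_derive (fun x => - s * (x + m) * phi ((x - m) / s)) x
     ((x ^ 2 - m ^ 2 - s ^ 2) * (phi ((x - m) / s) / s))).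
  { unfold phi. auto_derive; auto. simpl. unfold Rdiv, Rminus. Req. field.
    rewrite sqrt2PI. assert (H1 := sqrt2_pos). assert (H2 := sqrtPI_pos). split; nra. }
  assert (DQ := is_derive_plus (K:=R_AbsRing) (V:=R_NormedModule) _ _ _ _ _ D1 D2).
  unfold npdf.
  replace ((x ^ 2 - s ^ 2) * (phi ((x - m) / s) / s)) with
    (plus ((x ^ 2 - m ^ 2 - s ^ 2) * (phi ((x - m) / s) / s)) (m ^ 2 * (phi ((x - m) / s) / s))).
  - exact DQ.
  - unfold plus; simpl. Req. ring.
Qed.

Definition f0 (s m x : R) : R := (x ^ 2 - s ^ 2) * npdf m s x.

Lemma f0_cont : forall s m x, 0 < s -> continuous (f0 s m) x.
Proof.
  intros s m x Hs. apply (@ex_derive_continuous R_AbsRing R_NormedModule).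
  unfold f0, npdf, phi. auto_derive. repeat split; lra.
Qed.

Lemma f0_int : forall s m a b, 0 < s -> is_RInt (f0 s m) a b (Q s m b - Q s m a).
Proof.
  intros s m a b Hs.
  apply (@is_RInt_derive R_CompleteNormedModule (Q s m) (f0 s m) a b).
  - intros x _. apply Q_deriv; auto.
  - intros x _. apply f0_cont; auto.
Qed.

Lemma is_RInt_Chasles_R (f : R -> R) a b c l1 l2 :
  is_RInt f a b l1 -> is_RInt f b c l2 -> is_RInt f a c (l1 + l2).
Proof. intros H1 H2. exact (@is_RInt_Chasles R_NormedModule f a b c l1 l2 H1 H2). Qed.

Lemma is_RInt_scal_R (f : R -> R) a b k l :
  is_RInt f a b l -> is_RInt (fun x => k * f x) a b (k * l).
Proof. intros H. exact (@is_RInt_scal R_NormedModule f a b k l H). Qed.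

Lemma is_RInt_eqv (f : R -> R) a b l l' : is_RInt f a b l -> l = l' -> is_RInt f a b l'.
Proof. intros H E; subst; auto. Qed.

Lemma toDefs (f : R -> R) a b v : is_RInt f a b v -> Defs.is_RInt f a b v.
Proof.
  intros H. assert (Hex : ex_RInt f a b) by (exists v; exact H).
  exists (ex_RInt_Reals_0 _ _ _ Hex).
  rewrite <- RInt_Reals. apply (@is_RInt_unique R_CompleteNormedModule). exact H.
Qed.

Definition ind (c x : R) : R := if Rlt_dec c (x ^ 2) then 0 else 1.
Definition kfun (s m c al be x : R) : R := f0 s m x * (al - be * ind c x).
Definition Aq (s m c : R) : R := Q s m (sqrt c) - Q s m (- sqrt c).

Lemma kfun_RInt : forall s m c al be a b, 0 < s -> 0 < c -> a < - sqrt c -> sqrt c < b ->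
  is_RInt (kfun s m c al be) a b (al * (Q s m b - Q s m a) - be * Aq s m c).
Proof.
  intros s m c al be a b Hs Hc Ha Hb.
  assert (Hsc : 0 < sqrt c) by (apply sqrt_lt_R0; auto).
  assert (Hcc : sqrt c * sqrt c = c) by (apply sqrt_sqrt; lra).
  assert (I1 : is_RInt (kfun s m c al be) a (- sqrt c) (al * (Q s m (- sqrt c) - Q s m a))).
  { apply is_RInt_ext with (fun x => al * f0 s m x).
    - intros x Hx. rewrite Rmin_left in Hx by lra. rewrite Rmax_right in Hx by lra.
      unfold kfun, ind. destruct (Rlt_dec c (x ^ 2)) as [_|N]. Req. ring.
      exfalso. apply N. nra.
    - apply is_RInt_scal_R. apply f0_int; auto. }
  assert (I2 : is_RInt (kfun s m c al be) (- sqrt c) (sqrt c) ((al - be) * Aq s m c)).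
  { apply is_RInt_ext with (fun x => (al - be) * f0 s m x).
    - intros x Hx. rewrite Rmin_left in Hx by lra. rewrite Rmax_right in Hx by lra.
      unfold kfun, ind. destruct (Rlt_dec c (x ^ 2)) as [N|_].
      exfalso. nra. Req. ring.
    - apply is_RInt_scal_R. apply f0_int; auto. }
  assert (I3 : is_RInt (kfun s m c al be) (sqrt c) b (al * (Q s m b - Q s m (sqrt c)))).
  { apply is_RInt_ext with (fun x => al * f0 s m x).
    - intros x Hx. rewrite Rmin_left in Hx by lra. rewrite Rmax_right in Hx by lra.
      unfold kfun, ind. destruct (Rlt_dec c (x ^ 2)) as [_|N]. Req. ring.
      exfalso. apply N. nra.
    - apply is_RInt_scal_R. apply f0_int; auto. }
  eapply is_RInt_eqv.
  - apply (is_RInt_Chasles_R _ _ _ _ _ _ (is_RInt_Chasles_R _ _ _ _ _ _ I1 I2) I3).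
  - unfold Aq. Req. ring.
Qed.

Lemma abs3 a b c A B C : Rabs a <= A -> Rabs b <= B -> Rabs c <= C -> Rabs (a + b + c) <= A + B + C.
Proof.
  intros. eapply Rle_trans; [apply Rabs_triang|]. apply Rplus_le_compat; auto.
  eapply Rle_trans; [apply Rabs_triang|]. apply Rplus_le_compat; auto.
Qed.

Lemma abs_prod_le a x X : 0 <= a -> Rabs x <= X -> Rabs (a * x) <= a * X.
Proof. intros Ha Hx. rewrite Rabs_mult, Rabs_right by lra. apply Rmult_le_compat_l; auto. Qed.

Lemma Q_tail_bound : forall s m w, 0 < s -> 1 <= w ->
  Rabs (Q s m (m + s * w) - m ^ 2 / 2) <= (2 * s ^ 2 + 4 * Rabs m * s + 2 * m ^ 2) / w /\
  Rabs (Q s m (m - s * w) + m ^ 2 / 2) <= (2 * s ^ 2 + 4 * Rabs m * s + 2 * m ^ 2) / w.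
Proof.
  intros s m w Hs Hw. unfold Q.
  replace ((m + s * w - m) / s) with w by (field; lra).
  replace ((m - s * w - m) / s) with (- w) by (field; lra).
  rewrite phi_even, Phi_odd.
  destruct (zphi_tail w Hw) as [A1 A2]. destruct (phi_tail w Hw) as [B1 B2].
  destruct (Phi_tail2 w Hw) as [C1 C2].
  assert (Hm := Rabs_pos m). assert (Hp : 0 <= m ^ 2) by nra. assert (Hs2 : 0 <= s ^ 2) by nra.
  replace ((2 * s ^ 2 + 4 * Rabs m * s + 2 * m ^ 2) / w) with
    (s ^ 2 * (2 / w) + (2 * s) * (Rabs m * (2 / w)) + m ^ 2 * (2 / w)) by (field; lra).
  assert (E1 : Rabs (w * phi w) <= 2 / w) by (rewrite Rabs_right; lra).
  assert (E2 : Rabs (- (w * phi w)) <= 2 / w) by (rewrite Rabs_Ropp; auto).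
  assert (E3 : Rabs (m * phi w) <= Rabs m * (2 / w)).
  { rewrite Rabs_mult, (Rabs_right (phi w)) by lra. apply Rmult_le_compat_l; auto. }
  assert (E4 : Rabs (- (m * phi w)) <= Rabs m * (2 / w)) by (rewrite Rabs_Ropp; auto).
  assert (E5 : Rabs (1 / 2 - Phi w) <= 2 / w) by (rewrite Rabs_right; lra).
  assert (E6 : Rabs (- (1 / 2 - Phi w)) <= 2 / w) by (rewrite Rabs_Ropp; auto).
  split.
  - replace (- s * (m + s * w + m) * phi w + m ^ 2 * Phi w - m ^ 2 / 2) with
      (s ^ 2 * (- (w * phi w)) + (2 * s) * (- (m * phi w)) + m ^ 2 * (- (1 / 2 - Phi w))) by field.
    apply abs3; apply abs_prod_le; auto; lra.
  - replace (- s * (m - s * w + m) * phi w + m ^ 2 * - Phi w + m ^ 2 / 2) with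
      (s ^ 2 * (w * phi w) + (2 * s) * (- (m * phi w)) + m ^ 2 * (1 / 2 - Phi w)) by field.
    apply abs3; apply abs_prod_le; auto; lra.
Qed.

Lemma Q_lims : forall s m eps, 0 < s -> 0 < eps -> exists N, 0 < N /\
  (forall b, N <= b -> Rabs (Q s m b - m ^ 2 / 2) < eps) /\
  (forall a, a <= - N -> Rabs (Q s m a + m ^ 2 / 2) < eps).
Proof.
  intros s m eps Hs He.
  set (K := 2 * s ^ 2 + 4 * Rabs m * s + 2 * m ^ 2).
  assert (HK : 0 <= K) by (unfold K; assert (H := Rabs_pos m); nra).
  set (W := K / eps + 1).
  assert (HW : 1 <= W) by (unfold W; assert (0 <= K / eps) by (apply Rmult_le_pos; [lra|apply Rlt_le, Rinv_0_lt_compat; lra]); lra).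
  assert (KW : K / W < eps).
  { apply Rmult_lt_reg_r with W; [lra|]. replace (K / W * W) with K by (field; lra).
    unfold W. replace (eps * (K / eps + 1)) with (K + eps) by (field; lra). lra. }
  assert (Hm := Rabs_pos m). assert (Hm1 := Rle_abs m). assert (Hm2 := Rle_abs (- m)). rewrite Rabs_Ropp in Hm2.
  exists (Rabs m + s * W). split; [nra|]. split.
  - intros b Hb. set (w := (b - m) / s).
    assert (Hw : W <= w).
    { unfold w. apply Rmult_le_reg_r with s; [lra|]. replace ((b - m) / s * s) with (b - m) by (field; lra). nra. }
    replace b with (m + s * w) by (unfold w; field; lra).
    destruct (Q_tail_bound s m w Hs ltac:(lra)) as [T _]. fold K in T.
    eapply Rle_lt_trans; [exact T|]. eapply Rle_lt_trans; [|exact KW].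
    apply Rmult_le_compat_l; auto. apply Rinv_le_contravar; lra.
  - intros a Ha. set (w := (m - a) / s).
    assert (Hw : W <= w).
    { unfold w. apply Rmult_le_reg_r with s; [lra|]. replace ((m - a) / s * s) with (m - a) by (field; lra). nra. }
    replace a with (m - s * w) by (unfold w; field; lra).
    destruct (Q_tail_bound s m w Hs ltac:(lra)) as [_ T]. fold K in T.
    eapply Rle_lt_trans; [exact T|]. eapply Rle_lt_trans; [|exact KW].
    apply Rmult_le_compat_l; auto. apply Rinv_le_contravar; lra.
Qed.

Lemma improper_kfun : forall s m c al be, 0 < s -> 0 < c ->
  improper_int (kfun s m c al be) (al * m ^ 2 - be * Aq s m c).
Proof.
  intros s m c al be Hs Hc eps He.
  assert (Hal := Rabs_pos al).
  destruct (Q_lims s m (eps / (2 * (Rabs al + 1))) Hs) as [N [HN [Hb Ha]]].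
  { apply Rdiv_lt_0_compat; lra. }
  assert (Hsc : 0 < sqrt c) by (apply sqrt_lt_R0; auto).
  exists (Rmax N (sqrt c + 1)). intros a b Ha' Hb'.
  assert (HM1 := Rmax_l N (sqrt c + 1)). assert (HM2 := Rmax_r N (sqrt c + 1)).
  exists (al * (Q s m b - Q s m a) - be * Aq s m c). split.
  - apply toDefs. apply kfun_RInt; auto; lra.
  - specialize (Hb b ltac:(lra)). specialize (Ha a ltac:(lra)).
    replace (al * (Q s m b - Q s m a) - be * Aq s m c - (al * m ^ 2 - be * Aq s m c))
      with (al * ((Q s m b - m ^ 2 / 2) - (Q s m a + m ^ 2 / 2))) by field.
    rewrite Rabs_mult.
    assert (T : Rabs ((Q s m b - m ^ 2 / 2) - (Q s m a + m ^ 2 / 2)) < 2 * (eps / (2 * (Rabs al + 1)))).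
    { eapply Rle_lt_trans; [apply Rabs_triang|]. rewrite Rabs_Ropp. lra. }
    set (T0 := Rabs ((Q s m b - m ^ 2 / 2) - (Q s m a + m ^ 2 / 2))) in *.
    assert (0 <= T0) by apply Rabs_pos.
    apply Rle_lt_trans with ((Rabs al + 1) * T0). nra.
    replace eps with ((Rabs al + 1) * (2 * (eps / (2 * (Rabs al + 1))))) by (field; lra).
    apply Rmult_lt_compat_l; lra.
Qed.

Lemma cosh_mono : forall a b, 0 <= a <= b -> exp a + exp (- a) <= exp b + exp (- b).
Proof.
  intros a b [Ha Hab]. rewrite !exp_Ropp.
  assert (X1 : 1 <= exp a) by (rewrite <- exp_0; destruct Ha as [Ha|Ha]; [left; apply exp_increasing; auto|rewrite Ha; lra]).
  assert (XY : exp a <= exp b) by (destruct Hab as [H|H]; [left; apply exp_increasing; auto|rewrite H; lra]).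
  set (X := exp a) in *. set (Y := exp b) in *.
  assert (E : Y + / Y - (X + / X) = (Y - X) * (1 - / (X * Y))) by (field; lra).
  assert (0 <= (Y - X) * (1 - / (X * Y))).
  { apply Rmult_le_pos; [lra|]. assert (/ (X * Y) <= 1). rewrite <- Rinv_1. apply Rinv_le_contravar; nra. lra. }
  lra.
Qed.

Lemma sinh_conv : forall t v, 0 <= t -> 0 <= v <= 1 ->
  exp (t * v) - exp (- (t * v)) <= v * (exp t - exp (- t)).
Proof.
  intros t v Ht Hv.
  set (S := exp t - exp (- t)).
  set (k := fun v => v * S - (exp (t * v) - exp (- (t * v)))).
  set (k' := fun v => S - t * (exp (t * v) + exp (- (t * v)))).
  assert (Dk : forall x, derivable_pt_lim k x (k' x)).
  { intros x. apply is_derive_Reals. unfold k, k'. auto_derive; auto. simpl. Req. ring. }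
  assert (k0 : k 0 = 0) by (unfold k; rewrite Rmult_0_r, Ropp_0, exp_0; ring).
  assert (k1 : k 1 = 0) by (unfold k, S; rewrite Rmult_1_r; ring).
  assert (Hmono : forall a b, 0 <= a <= b -> k' b <= k' a).
  { intros a b Hab. unfold k'. assert (H := cosh_mono (t * a) (t * b) ltac:(split; nra)).
    apply Rplus_le_compat_l. apply Ropp_le_contravar. apply Rmult_le_compat_l; auto. }
  enough (0 <= k v) by (unfold k in *; lra).
  destruct (Req_dec v 0) as [E|E]; [subst; lra|].
  destruct (Req_dec v 1) as [E'|E']; [subst; lra|].
  destruct (MVT_cor2 k k' 0 v ltac:(lra) (fun c _ => Dk c)) as [c1 [Ec1 Hc1]].
  destruct (MVT_cor2 k k' v 1 ltac:(lra) (fun c _ => Dk c)) as [c2 [Ec2 Hc2]].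
  assert (Hk := Hmono c1 c2 ltac:(lra)).
  rewrite k0 in Ec1. rewrite k1 in Ec2.
  assert (A1 : k v = k' c1 * v) by lra.
  assert (A2 : - k v = k' c2 * (1 - v)) by lra.
  destruct (Rle_dec 0 (k v)) as [P|P]; auto. exfalso.
  assert (k' c1 < 0) by (destruct (Rle_dec 0 (k' c1)); [nra|lra]).
  assert (0 < k' c2) by (destruct (Rle_dec (k' c2) 0); [nra|lra]).
  lra.
Qed.

Lemma sqrt2PI_ge : 2.44 <= sqrt (2 * PI).
Proof.
  assert (H := PI2_3_2). rewrite <- (sqrt_pow2 2.44) by lra.
  apply sqrt_le_1_alt. lra.
Qed.

Lemma exp_mhalf_ge : 1 / 2 <= exp (- (1 / 2)).
Proof.
  assert (H : exp (1 / 2) * exp (1 / 2) = exp 1) by (rewrite <- exp_plus; f_equal; field).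
  assert (H3 := exp_le_3). assert (P := exp_pos (1 / 2)).
  assert (exp (1 / 2) <= 2) by nra.
  rewrite exp_Ropp. apply Rmult_le_reg_r with (exp (1 / 2)); auto.
  rewrite Rinv_l by lra. lra.
Qed.

Lemma key_ineq : forall t v p, 1 <= t -> 0 <= v <= 1 -> phi 1 <= p ->
  (1 + t ^ 2) * (phi (t - v) - phi (t + v)) <= 2 * v * (1 + p).
Proof.
  intros t v p Ht Hv Hp.
  assert (HW := sqrt2PI_ge). set (W := sqrt (2 * PI)) in *.
  assert (E1 : phi (t - v) - phi (t + v) =
     exp (- ((t ^ 2 + v ^ 2) / 2)) * (exp (t * v) - exp (- (t * v))) / W).
  { unfold phi. fold W.
    replace (- (t - v) ^ 2 / 2) with (- ((t ^ 2 + v ^ 2) / 2) + t * v) by field.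
    replace (- (t + v) ^ 2 / 2) with (- ((t ^ 2 + v ^ 2) / 2) + - (t * v)) by field.
    rewrite !exp_plus. field. lra. }
  assert (E2 : exp (- ((t ^ 2 + v ^ 2) / 2)) <= exp (- (t ^ 2 / 2))).
  { destruct (Req_dec v 0) as [Z|Z]. subst. right. f_equal. field.
    left. apply exp_increasing. nra. }
  assert (S1 := sinh_conv t v ltac:(lra) Hv).
  assert (S0 : 0 <= exp (t * v) - exp (- (t * v))).
  { assert (exp (- (t * v)) <= exp (t * v)).
    { destruct (Req_dec (t * v) 0) as [Z|Z]. rewrite Z, Ropp_0. lra. left. apply exp_increasing. nra. }
    lra. }
  assert (Et : exp (- t) > 0) by apply exp_pos.
  assert (F1 : exp (- ((t ^ 2 + v ^ 2) / 2)) * (exp (t * v) - exp (- (t * v)))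
               <= v * exp (t - t ^ 2 / 2)).
  { apply Rle_trans with (exp (- (t ^ 2 / 2)) * (v * (exp t - exp (- t)))).
    - apply Rmult_le_compat; auto. apply Rlt_le, exp_pos.
    - replace (t - t ^ 2 / 2) with (- (t ^ 2 / 2) + t) by field. rewrite exp_plus.
      assert (0 < exp (- (t ^ 2 / 2))) by apply exp_pos. assert (0 <= exp (- (t ^ 2 / 2)) * v * exp (- t)) by (apply Rmult_le_pos; [apply Rmult_le_pos|]; lra). nra. }
  assert (F2 : (1 + t ^ 2) * exp (t - t ^ 2 / 2) <= 5.5).
  { assert (H := exp_ineq1_le (t ^ 2 / 2 - t)).
    replace (t - t ^ 2 / 2) with (- (t ^ 2 / 2 - t)) by field. rewrite exp_Ropp.
    assert (P := exp_pos (t ^ 2 / 2 - t)).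
    apply Rmult_le_reg_r with (exp (t ^ 2 / 2 - t)); auto.
    rewrite Rmult_assoc, Rinv_l by lra. assert (0 <= (t - 11 / 7) ^ 2) by apply pow2_ge_0. nra. }
  assert (HE := exp_mhalf_ge).
  assert (Hp1 : exp (- (1 / 2)) / W <= p).
  { unfold phi in Hp. fold W in Hp. replace (- (1 / 2)) with (- 1 ^ 2 / 2) by field. auto. }
  rewrite E1.
  assert (G : (1 + t ^ 2) * (exp (- ((t ^ 2 + v ^ 2) / 2)) * (exp (t * v) - exp (- (t * v))))
              <= 5.5 * v).
  { apply Rle_trans with ((1 + t ^ 2) * (v * exp (t - t ^ 2 / 2))).
    apply Rmult_le_compat_l; [nra|auto]. nra. }
  apply Rle_trans with (5.5 * v / W).
  - unfold Rdiv. rewrite <- Rmult_assoc. apply Rmult_le_compat_r. apply Rlt_le, Rinv_0_lt_compat; lra.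
    exact G.
  - apply Rle_trans with (2 * v * (1 + exp (- (1 / 2)) / W)).
    + apply Rmult_le_reg_r with W; [lra|].
      replace (5.5 * v / W * W) with (5.5 * v) by (field; lra).
      replace (2 * v * (1 + exp (- (1 / 2)) / W) * W) with (v * (2 * W + 2 * exp (- (1 / 2)))) by (field; lra).
      nra.
    + apply Rmult_le_compat_l; lra.
Qed.

Definition At (t m : R) : R := Q 1 m t - Q 1 m (- t).
Definition Pt (t m : R) : R := Phi (t - m) - Phi (- t - m).

Lemma Q1_eq : forall m x, Q 1 m x = - (x + m) * phi (x - m) + m ^ 2 * Phi (x - m).
Proof. intros. unfold Q. rewrite !Rdiv_1. ring. Qed.

Lemma Pt_bounds : forall t m, 0 <= t -> 0 <= Pt t m <= 1.
Proof.
  intros t m Ht. unfold Pt. split.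
  - assert (Phi (- t - m) <= Phi (t - m)) by (apply Phi_mono; lra). lra.
  - destruct (Phi_bound (t - m)). destruct (Phi_bound (- t - m)). lra.
Qed.

Lemma npdf1_int : forall m a b, is_RInt (npdf m 1) a b (Phi ((b - m) / 1) - Phi ((a - m) / 1)).
Proof.
  intros m a b.
  apply (@is_RInt_derive R_CompleteNormedModule (fun x => Phi ((x - m) / 1)) (npdf m 1) a b).
  - intros x _. unfold npdf. apply Phi_comp_deriv. lra.
  - intros x _. apply (@ex_derive_continuous R_AbsRing R_NormedModule). unfold npdf, phi.
    auto_derive. repeat split; try lra.
Qed.

Lemma At_bounds : forall t m, 1 <= t -> - 1 <= At t m <= t ^ 2 - 1.
Proof.
  intros t m Ht.
  assert (I0 := f0_int 1 m (- t) t ltac:(lra)).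
  assert (I1 := npdf1_int m (- t) t). rewrite !Rdiv_1 in I1.
  fold (Pt t m) in I1. assert (HP := Pt_bounds t m ltac:(lra)).
  assert (Hn : forall x, 0 <= npdf m 1 x) by (intros; unfold npdf; rewrite Rdiv_1; apply Rlt_le, phi_pos).
  split.
  - assert (L := is_RInt_le (fun x => -1 * npdf m 1 x) (f0 1 m) (- t) t (-1 * Pt t m) (At t m)
                  ltac:(lra) (is_RInt_scal_R _ _ _ _ _ I1) I0).
    assert (-1 * Pt t m <= At t m).
    { apply L. intros x _. unfold f0. specialize (Hn x). nra. }
    lra.
  - assert (L := is_RInt_le (f0 1 m) (fun x => (t ^ 2 - 1) * npdf m 1 x) (- t) t (At t m) ((t ^ 2 - 1) * Pt t m)
                  ltac:(lra) I0 (is_RInt_scal_R _ _ _ _ _ I1)).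
    assert (At t m <= (t ^ 2 - 1) * Pt t m).
    { apply L. intros x Hx. unfold f0. specialize (Hn x). assert (x ^ 2 <= t ^ 2) by nra. nra. }
    assert (0 <= t ^ 2 - 1) by nra. destruct HP. assert (0 <= (t ^ 2 - 1) * (1 - Pt t m)) by (apply Rmult_le_pos; lra). nra.
Qed.

Lemma At0 : forall t, At t 0 = - 2 * t * phi t.
Proof.
  intros t. unfold At. rewrite !Q1_eq. replace (- t - 0) with (- t) by ring.
  rewrite phi_even. replace (t - 0) with t by ring. ring.
Qed.

Lemma Phi_shift_deriv : forall x m : R, is_derive (fun m => Phi (x - m)) m (- phi (x - m)).
Proof.
  intros x m.
  replace (- phi (x - m)) with (scal (-1) (phi (x - m))) by (unfold scal; simpl; unfold mult; simpl; Req; ring).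
  apply (is_derive_comp (K:=R_AbsRing) (V:=R_NormedModule) Phi (fun m => x - m) m).
  - apply Phi_deriv.
  - auto_derive; auto; Req; ring.
Qed.

Lemma q1_deriv : forall x m : R,
  is_derive (fun m => Q 1 m x) m (- (1 + x ^ 2) * phi (x - m) + 2 * m * Phi (x - m)).
Proof.
  intros x m.
  assert (D1 : is_derive (fun m => - (x + m) * phi (x - m)) m (- (1 + x ^ 2 - m ^ 2) * phi (x - m))).
  { unfold phi. auto_derive; auto. simpl. unfold Rdiv, Rminus. Req. field.
    rewrite sqrt2PI. assert (H1 := sqrt2_pos). assert (H2 := sqrtPI_pos). nra. }
  assert (D2 : is_derive (fun m => m ^ 2 * Phi (x - m)) m (2 * m * Phi (x - m) - m ^ 2 * phi (x - m))).
  { assert (H := is_derive_mult (K:=R_AbsRing) (fun m => m ^ 2) (fun m => Phi (x - m)) m (2 * m) (- phi (x - m))).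
    replace (2 * m * Phi (x - m) - m ^ 2 * phi (x - m)) with
      (plus (mult (2 * m) (Phi (x - m))) (mult (m ^ 2) (- phi (x - m)))).
    - apply H.
      + auto_derive; auto; Req; ring.
      + apply Phi_shift_deriv.
      + intros; apply Rmult_comm.
    - unfold plus, mult; simpl. Req. ring. }
  assert (DQ := is_derive_plus (K:=R_AbsRing) (V:=R_NormedModule) _ _ _ _ _ D1 D2).
  eapply is_derive_ext.
  - intros t. symmetry. apply Q1_eq.
  - replace (- (1 + x ^ 2) * phi (x - m) + 2 * m * Phi (x - m)) with
      (plus (- (1 + x ^ 2 - m ^ 2) * phi (x - m)) (2 * m * Phi (x - m) - m ^ 2 * phi (x - m))).
    + exact DQ.
    + unfold plus; simpl. Req. ring.
Qed.

Definition Atd (t m : R) : R := - (1 + t ^ 2) * (phi (t - m) - phi (t + m)) + 2 * m * Pt t m.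

Lemma At_deriv : forall t m : R, derivable_pt_lim (At t) m (Atd t m).
Proof.
  intros t m. apply is_derive_Reals.
  assert (D := is_derive_minus (K:=R_AbsRing) (V:=R_NormedModule) _ _ _ _ _ (q1_deriv t m) (q1_deriv (- t) m)).
  unfold At, Atd.
  replace (- (1 + t ^ 2) * (phi (t - m) - phi (t + m)) + 2 * m * Pt t m) with
    (minus (- (1 + t ^ 2) * phi (t - m) + 2 * m * Phi (t - m))
           (- (1 + (- t) ^ 2) * phi (- t - m) + 2 * m * Phi (- t - m))).
  - exact D.
  - unfold minus, plus, opp; simpl. unfold Pt.
    replace (- t - m) with (- (t + m)) by ring. rewrite phi_even. Req. ring.
Qed.

Lemma phi_le : forall a b, a ^ 2 <= b ^ 2 -> phi b <= phi a.
Proof.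
  intros a b H. unfold phi. unfold Rdiv. apply Rmult_le_compat_r.
  - apply Rlt_le, Rinv_0_lt_compat. rewrite sqrt2PI. assert (H1 := sqrt2_pos). assert (H2 := sqrtPI_pos). nra.
  - destruct H as [H|H].
    + left. apply exp_increasing. lra.
    + rewrite H. lra.
Qed.

Lemma Pt_lower : forall t x, 1 <= t -> -1 <= x <= 1 -> phi 1 <= Pt t x.
Proof.
  intros t x Ht Hx. unfold Pt.
  assert (O1 : Phi (-1) = - Phi 1) by (rewrite <- Phi_odd; f_equal; ring).
  assert (O0 := Phi0).
  assert (A3 : phi 1 <= Phi 0 - Phi (-1)).
  { rewrite <- RInt_phi.
    replace (phi 1) with (RInt (fun _ => phi 1) (-1) 0).
    - apply RInt_le; try lra. apply ex_RInt_const. apply phi_ex.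
      intros y Hy. apply phi_le. nra.
    - rewrite RInt_const. unfold scal; simpl; unfold mult; simpl. Req. ring. }
  destruct (Rle_dec 0 x).
  - assert (A1 : Phi 0 <= Phi (t - x)) by (apply Phi_mono; lra).
    assert (A2 : Phi (- t - x) <= Phi (-1)) by (apply Phi_mono; lra).
    lra.
  - assert (A1 : Phi 1 <= Phi (t - x)) by (apply Phi_mono; lra).
    assert (A2 : Phi (- t - x) <= Phi 0) by (apply Phi_mono; lra).
    lra.
Qed.

Lemma T_deriv : forall t x : R, derivable_pt_lim (fun m => m ^ 2 - At t m) x (2 * x - Atd t x).
Proof.
  intros t x. apply is_derive_Reals.
  assert (D1 : is_derive (fun m : R => m ^ 2) x (2 * x)) by (auto_derive; auto; Req; ring).
  assert (D2 : is_derive (At t) x (Atd t x)) by (apply is_derive_Reals; apply At_deriv).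
  exact (is_derive_minus (K:=R_AbsRing) (V:=R_NormedModule) _ _ _ _ _ D1 D2).
Qed.

Lemma U_deriv : forall t x : R, derivable_pt_lim (fun m => At t m + m ^ 2) x (Atd t x + 2 * x).
Proof.
  intros t x. apply is_derive_Reals.
  assert (D1 : is_derive (fun m : R => m ^ 2) x (2 * x)) by (auto_derive; auto; Req; ring).
  assert (D2 : is_derive (At t) x (Atd t x)) by (apply is_derive_Reals; apply At_deriv).
  exact (is_derive_plus (K:=R_AbsRing) (V:=R_NormedModule) _ _ _ _ _ D2 D1).
Qed.

Lemma At_upper : forall t m, 1 <= t -> At t m - At t 0 <= m ^ 2.
Proof.
  intros t m Ht.
  assert (Sg : forall x, 0 <= x * (2 * x - Atd t x)).
  { intros x. unfold Atd. assert (HP := Pt_bounds t x ltac:(lra)).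
    replace (2 * x - (- (1 + t ^ 2) * (phi (t - x) - phi (t + x)) + 2 * x * Pt t x))
      with (2 * x * (1 - Pt t x) + (1 + t ^ 2) * (phi (t - x) - phi (t + x))) by ring.
    destruct (Rle_dec 0 x) as [Hx|Hx].
    - assert (phi (t + x) <= phi (t - x)) by (apply phi_le; nra).
      assert (0 <= 2 * x * (1 - Pt t x)) by (apply Rmult_le_pos; lra).
      assert (0 <= (1 + t ^ 2) * (phi (t - x) - phi (t + x))) by (apply Rmult_le_pos; nra).
      apply Rmult_le_pos; lra.
    - assert (phi (t - x) <= phi (t + x)) by (apply phi_le; nra).
      assert (2 * x * (1 - Pt t x) <= 0) by nra.
      assert ((1 + t ^ 2) * (phi (t - x) - phi (t + x)) <= 0).
      { assert (0 <= (1 + t ^ 2) * (phi (t + x) - phi (t - x))) by (apply Rmult_le_pos; nra). nra. }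
      nra. }
  destruct (Rtotal_order 0 m) as [Hm|[Hm|Hm]].
  - destruct (MVT_cor2 _ _ 0 m Hm (fun c _ => T_deriv t c)) as [c [Ec Hc]].
    specialize (Sg c). assert (0 <= 2 * c - Atd t c) by nra. nra.
  - subst. simpl. lra.
  - destruct (MVT_cor2 _ _ m 0 Hm (fun c _ => T_deriv t c)) as [c [Ec Hc]].
    specialize (Sg c). assert (2 * c - Atd t c <= 0) by nra. nra.
Qed.

Lemma At_lower : forall t m, 1 <= t -> - m ^ 2 <= At t m - At t 0.
Proof.
  intros t m Ht.
  destruct (Rle_dec 1 (m ^ 2)) as [Hm|Hm].
  - destruct (At_bounds t m Ht). rewrite At0.
    assert (0 <= t * phi t) by (apply Rmult_le_pos; [lra|apply Rlt_le, phi_pos]). lra.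
  - assert (Hm1 : -1 < m < 1) by (split; nra).
    assert (Sg : forall x, 0 <= x <= 1 -> 0 <= Atd t x + 2 * x).
    { intros x Hx. assert (K := key_ineq t x (Pt t x) Ht Hx (Pt_lower t x Ht ltac:(lra))).
      unfold Atd. nra. }
    assert (Sg' : forall x, -1 <= x <= 0 -> Atd t x + 2 * x <= 0).
    { intros x Hx. assert (K := key_ineq t (- x) (Pt t x) Ht ltac:(lra) (Pt_lower t x Ht ltac:(lra))).
      unfold Atd. replace (t - - x) with (t + x) in K by ring. replace (t + - x) with (t - x) in K by ring.
      nra. }
    destruct (Rtotal_order 0 m) as [H0|[H0|H0]].
    + destruct (MVT_cor2 _ _ 0 m H0 (fun c _ => U_deriv t c)) as [c [Ec Hc]].
      assert (0 <= Atd t c + 2 * c) by (apply Sg; lra). nra.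
    + subst. simpl. lra.
    + destruct (MVT_cor2 _ _ m 0 H0 (fun c _ => U_deriv t c)) as [c [Ec Hc]].
      assert (Atd t c + 2 * c <= 0) by (apply Sg'; lra). nra.
Qed.

Lemma At_diff : forall t m, 1 <= t ->
  Rabs (At t m - At t 0) <= m ^ 2 /\ Rabs (At t m - At t 0) <= t ^ 2.
Proof.
  intros t m Ht. split.
  - apply Rabs_le. split; [apply At_lower|apply At_upper]; auto.
  - destruct (At_bounds t m Ht). destruct (At_bounds t 0 Ht). apply Rabs_le. lra.
Qed.

Lemma improper_unique : forall f l1 l2, improper_int f l1 -> improper_int f l2 -> l1 = l2.
Proof.
  intros f l1 l2 H1 H2.
  destruct (Req_dec l1 l2) as [E|E]; auto. exfalso.
  assert (He : 0 < Rabs (l1 - l2) / 2) by (assert (0 < Rabs (l1 - l2)) by (apply Rabs_pos_lt; lra); lra).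
  destruct (H1 _ He) as [M1 HM1]. destruct (H2 _ He) as [M2 HM2].
  set (M := Rmax (Rmax M1 M2) 0).
  assert (A1 := Rmax_l (Rmax M1 M2) 0). assert (A2 := Rmax_r (Rmax M1 M2) 0).
  assert (A3 := Rmax_l M1 M2). assert (A4 := Rmax_r M1 M2).
  destruct (HM1 (- M) M ltac:(unfold M; lra) ltac:(unfold M; lra)) as [v1 [[pr1 E1] B1]].
  destruct (HM2 (- M) M ltac:(unfold M; lra) ltac:(unfold M; lra)) as [v2 [[pr2 E2] B2]].
  assert (v1 = v2) by (rewrite <- E1, <- E2; apply RiemannInt_P5).
  subst v2.
  assert (Rabs (l1 - l2) <= Rabs (v1 - l2) + Rabs (v1 - l1)).
  { replace (l1 - l2) with ((v1 - l2) - (v1 - l1)) by ring.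
    eapply Rle_trans; [apply Rabs_triang|]. rewrite Rabs_Ropp. lra. }
  rewrite <- H in B2. lra.
Qed.

Lemma sqrt_c : forall s tau, 0 < s -> 0 <= tau -> sqrt (s ^ 2 * tau) = s * sqrt tau.
Proof.
  intros s tau Hs Ht. rewrite sqrt_mult by nra. rewrite sqrt_pow2 by lra. reflexivity.
Qed.

Lemma Aq_scale : forall s m tau, 0 < s -> 0 <= tau ->
  Aq s m (s ^ 2 * tau) = s ^ 2 * At (sqrt tau) (m / s).
Proof.
  intros s m tau Hs Ht. unfold Aq, At. rewrite sqrt_c by auto.
  set (t := sqrt tau). unfold Q.
  replace ((s * t - m) / s) with ((t - m / s) / 1) by (field; lra).
  replace ((- (s * t) - m) / s) with ((- t - m / s) / 1) by (field; lra).
  field. lra.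
Qed.

Definition hh (s c m y : R) : R :=
  (y ^ 2 - s ^ 2) * m ^ 2 - (if Rlt_dec c (y ^ 2) then 0 else (y ^ 2 - s ^ 2)) * Aq s m c.

Lemma inner_int : forall s tau m y, 0 < s -> 0 < s ^ 2 * tau ->
  improper_int (fun x => gfun s tau x y * npdf m s x) (hh s (s ^ 2 * tau) m y).
Proof.
  intros s tau m y Hs Hc.
  set (c := s ^ 2 * tau) in *.
  replace (fun x => gfun s tau x y * npdf m s x) with
    (kfun s m c (y ^ 2 - s ^ 2) (if Rlt_dec c (y ^ 2) then 0 else (y ^ 2 - s ^ 2))).
  - apply improper_kfun; auto.
  - apply functional_extensionality. intros x.
    unfold kfun, f0, ind, gfun, ind_max. fold c.
    destruct (Rlt_dec c (y ^ 2)) as [Hy|Hy];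
    destruct (Rlt_dec c (x ^ 2)) as [Hx|Hx];
    destruct (Rlt_dec c (Rmax (x ^ 2) (y ^ 2))) as [Hm|Hm]; try ring.
    + exfalso. apply Hm. eapply Rlt_le_trans; [exact Hy|apply Rmax_r].
    + exfalso. apply Hm. eapply Rlt_le_trans; [exact Hy|apply Rmax_r].
    + exfalso. apply Hm. eapply Rlt_le_trans; [exact Hx|apply Rmax_l].
    + exfalso. unfold Rmax in Hm. destruct (Rle_dec (x ^ 2) (y ^ 2)); lra.
Qed.

Lemma outer_int : forall s c m th, 0 < s -> 0 < c ->
  improper_int (fun y => hh s c m y * npdf th s y) (m ^ 2 * th ^ 2 - Aq s m c * Aq s th c).
Proof.
  intros s c m th Hs Hc.
  replace (fun y => hh s c m y * npdf th s y) with (kfun s th c (m ^ 2) (Aq s m c)).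
  - apply improper_kfun; auto.
  - apply functional_extensionality. intros y.
    unfold kfun, f0, ind, hh. destruct (Rlt_dec c (y ^ 2)); ring.
Qed.

Lemma D_bound : forall s tau m, 0 < s -> 1 <= tau ->
  Rabs (Aq s m (s ^ 2 * tau) - Aq s 0 (s ^ 2 * tau)) <= Rmin (m ^ 2) (3 * s ^ 2 * tau).
Proof.
  intros s tau m Hs Ht.
  rewrite !Aq_scale by lra. replace (0 / s) with 0 by (field; lra).
  assert (Ht1 : 1 <= sqrt tau) by (rewrite <- sqrt_1; apply sqrt_le_1_alt; lra).
  destruct (At_diff (sqrt tau) (m / s) Ht1) as [B1 B2].
  rewrite pow2_sqrt in B2 by lra.
  replace (s ^ 2 * At (sqrt tau) (m / s) - s ^ 2 * At (sqrt tau) 0) with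
    (s ^ 2 * (At (sqrt tau) (m / s) - At (sqrt tau) 0)) by ring.
  rewrite Rabs_mult, (Rabs_right (s ^ 2)) by nra.
  apply Rmin_glb.
  - replace (m ^ 2) with (s ^ 2 * (m / s) ^ 2) by (field; lra).
    apply Rmult_le_compat_l; nra.
  - assert (s ^ 2 * Rabs (At (sqrt tau) (m / s) - At (sqrt tau) 0) <= s ^ 2 * tau)
      by (apply Rmult_le_compat_l; nra).
    nra.
Qed.

Lemma A0_val : forall s tau, 0 < s -> 1 <= tau ->
  Aq s 0 (s ^ 2 * tau) = - (2 * s ^ 2 * sqrt tau * phi (sqrt tau)).
Proof.
  intros s tau Hs Ht. rewrite Aq_scale by lra. replace (0 / s) with 0 by (field; lra).
  rewrite At0. ring.
Qed.

Theorem lemma3 (mu th s tau : R) (hs : 0 < s) (htau : 1 <= tau) :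
  expect2 (gfun s tau) 0 0 s (- 4 * s ^ 4 * tau * (phi (sqrt tau)) ^ 2) /\
  (exists l, expect2 (gfun s tau) mu th s l) /\
  (forall l, expect2 (gfun s tau) mu th s l ->
     Rabs (l - (- 4 * s ^ 4 * tau * (phi (sqrt tau)) ^ 2) - mu ^ 2 * th ^ 2)
     <= Rmin (mu ^ 2) (3 * s ^ 2 * tau) * Rmin (th ^ 2) (3 * s ^ 2 * tau)
        + 2 * s ^ 2 * sqrt tau * phi (sqrt tau) * Rmin (mu ^ 2) (3 * s ^ 2 * tau)
        + 2 * s ^ 2 * sqrt tau * phi (sqrt tau) * Rmin (th ^ 2) (3 * s ^ 2 * tau)).
Proof.
  assert (Hc : 0 < s ^ 2 * tau) by (apply Rmult_lt_0_compat; nra).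
  assert (Hphi := phi_pos (sqrt tau)).
  assert (Hst : 0 <= sqrt tau) by apply sqrt_pos.
  assert (Htt : sqrt tau ^ 2 = tau) by (apply pow2_sqrt; lra).
  assert (HA0 := A0_val s tau hs htau).
  assert (E0 : forall m th, expect2 (gfun s tau) m th s (m ^ 2 * th ^ 2 - Aq s m (s ^ 2 * tau) * Aq s th (s ^ 2 * tau))).
  { intros m th0. exists (hh s (s ^ 2 * tau) m). split.
    - intros y. apply inner_int; auto.
    - apply outer_int; auto. }
  split; [|split].
  - replace (- 4 * s ^ 4 * tau * phi (sqrt tau) ^ 2) with
      (0 ^ 2 * 0 ^ 2 - Aq s 0 (s ^ 2 * tau) * Aq s 0 (s ^ 2 * tau)).
    + apply E0.
    + rewrite HA0. set (r := sqrt tau) in *. rewrite <- Htt. ring.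
  - eexists. apply E0.
  - intros l [h [Hh Hl]].
    assert (Eh : h = hh s (s ^ 2 * tau) mu).
    { apply functional_extensionality. intros y.
      apply (improper_unique _ _ _ (Hh y)). apply inner_int; auto. }
    subst h.
    assert (El := improper_unique _ _ _ Hl (outer_int s (s ^ 2 * tau) mu th hs Hc)).
    subst l.
    set (A0 := Aq s 0 (s ^ 2 * tau)).
    set (Dm := Aq s mu (s ^ 2 * tau) - A0).
    set (Dt := Aq s th (s ^ 2 * tau) - A0).
    assert (B1 : Rabs Dm <= Rmin (mu ^ 2) (3 * s ^ 2 * tau)) by (apply D_bound; auto).
    assert (B2 : Rabs Dt <= Rmin (th ^ 2) (3 * s ^ 2 * tau)) by (apply D_bound; auto).
    set (a := 2 * s ^ 2 * sqrt tau * phi (sqrt tau)).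
    assert (Ha : 0 <= a) by (unfold a; apply Rmult_le_pos; [apply Rmult_le_pos|]; nra).
    assert (HA : A0 = - a) by (unfold A0, a; exact HA0).
    replace (mu ^ 2 * th ^ 2 - Aq s mu (s ^ 2 * tau) * Aq s th (s ^ 2 * tau) -
             - 4 * s ^ 4 * tau * phi (sqrt tau) ^ 2 - mu ^ 2 * th ^ 2)
      with (- (Dm * Dt) + a * Dm + a * Dt).
    2:{ unfold Dm, Dt. fold A0. rewrite HA. unfold a. set (r := sqrt tau) in *. rewrite <- Htt. ring. }
    set (Rm := Rmin (mu ^ 2) (3 * s ^ 2 * tau)) in *.
    set (Rt := Rmin (th ^ 2) (3 * s ^ 2 * tau)) in *.
    apply abs3.
    + rewrite Rabs_Ropp, Rabs_mult. apply Rmult_le_compat; auto; apply Rabs_pos.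
    + apply abs_prod_le; auto.
    + apply abs_prod_le; auto.
Qed.
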